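(* Let $M^2(\rho)$ be a 2-dimensional Riemannian space form of constant curvature $\rho$. If $\rho\le 0$, the only triharmonic curves in $M^2(\rho)$ are geodesics. If $\rho>0$, the triharmonic curves in $M^2(\rho)$ are either geodesics or circles (curves of constant geodesic curvature $\kappa_g$) satisfying $\kappa_g^2=2\rho$.
   Context: An arc-length parametrized curve $\gamma$ in a Riemannian manifold $M$ with Levi-Civita connection $\nabla$, curvature tensor $R^M(X,Y)=\nabla_X\nabla_Y-\nabla_Y\nabla_X-\nabla_{[X,Y]}$ and $T=\gamma'$ is called triharmonic if $\nabla_T^5T+R^M(\nabla_T^3T,T)T-R^M(\nabla_T^2T,\nabla_TT)T=0$. The geodesic curvature $\kappa_g$ of a curve in a surface is defined by $\nabla_TT=\kappa_gJT$, with $J$ the rotation by $\pi/2$. *)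

(* Defs.v *)
From Stdlib Require Import Reals.
From Coquelicot Require Import Coquelicot.
Open Scope R_scope.

(* Vectors of R^3 (ambient space of the model surfaces). *)
Record vec3 := V3 { c1 : R; c2 : R; c3 : R }.

Definition vzero : vec3 := V3 0 0 0.
Definition vadd (u v : vec3) : vec3 := V3 (c1 u + c1 v) (c2 u + c2 v) (c3 u + c3 v).
Definition vscal (a : R) (u : vec3) : vec3 := V3 (a * c1 u) (a * c2 u) (a * c3 u).
Definition vsub (u v : vec3) : vec3 := vadd u (vscal (-1) v).

(* Ambient metric: Euclidean (e = 1) for rho >= 0, Lorentzian (e = -1) for rho < 0. *)
Definition eps (rho : R) : R := if Rlt_dec rho 0 then -1 else 1.
Definition ip (e : R) (u v : vec3) : R := c1 u * c1 v + c2 u * c2 v + e * (c3 u * c3 v).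
(* Cross product adapted to the metric diag(1,1,e). *)
Definition cross (e : R) (u v : vec3) : vec3 :=
  V3 (c2 u * c3 v - c3 u * c2 v) (c3 u * c1 v - c1 u * c3 v) (e * (c1 u * c2 v - c2 u * c1 v)).

(* The model space form M^2(rho):
   rho = 0 : the plane {x3 = 0} in Euclidean R^3;
   rho > 0 : the sphere {<x,x> = 1/rho} in Euclidean R^3;
   rho < 0 : the hyperboloid {<x,x>_L = 1/rho} in Minkowski R^{2,1}. *)
Definition in_space_form (rho : R) (x : vec3) : Prop :=
  if Req_EM_T rho 0 then c3 x = 0 else ip (eps rho) x x = / rho.

Definition vderiv (V : R -> vec3) (t : R) : vec3 :=
  V3 (Derive (fun s => c1 (V s)) t) (Derive (fun s => c2 (V s)) t) (Derive (fun s => c3 (V s)) t).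

(* Levi-Civita covariant derivative along gamma in M^2(rho): tangential
   projection of the ambient derivative (the unit normal direction at x is x,
   with <x,x> = 1/rho; for rho = 0 the projection is the identity). *)
Definition nabla (rho : R) (g : R -> vec3) (V : R -> vec3) : R -> vec3 :=
  fun t => vsub (vderiv V t) (vscal (rho * ip (eps rho) (vderiv V t) (g t)) (g t)).

Definition tangent (g : R -> vec3) : R -> vec3 := vderiv g.
Fixpoint nablaT (rho : R) (g : R -> vec3) (k : nat) : R -> vec3 :=
  match k with
  | O => tangent g
  | S k' => nabla rho g (nablaT rho g k')
  end.

(* Curvature tensor of a space of constant curvature rho, with the convention
   R(X,Y) = nabla_X nabla_Y - nabla_Y nabla_X - nabla_[X,Y]. *)
Definition curvR (rho : R) (X Y Z : vec3) : vec3 :=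
  vscal rho (vsub (vscal (ip (eps rho) Y Z) X) (vscal (ip (eps rho) X Z) Y)).

(* Unit normal and the rotation J by pi/2 in the tangent plane at x. *)
Definition normalv (rho : R) (x : vec3) : vec3 :=
  if Req_EM_T rho 0 then V3 0 0 1 else vscal (sqrt (Rabs rho)) x.
Definition Jrot (rho : R) (x X : vec3) : vec3 := cross (eps rho) (normalv rho x) X.

Definition smooth_on (a b : R) (g : R -> vec3) : Prop :=
  forall (n : nat) (t : R), a < t < b ->
    ex_derive_n (fun s => c1 (g s)) n t /\
    ex_derive_n (fun s => c2 (g s)) n t /\
    ex_derive_n (fun s => c3 (g s)) n t.

Definition arc_length (rho a b : R) (g : R -> vec3) : Prop :=
  forall t, a < t < b -> ip (eps rho) (tangent g t) (tangent g t) = 1.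

Definition triharmonic (rho a b : R) (g : R -> vec3) : Prop :=
  forall t, a < t < b ->
    vadd (nablaT rho g 5 t)
      (vsub (curvR rho (nablaT rho g 3 t) (tangent g t) (tangent g t))
            (curvR rho (nablaT rho g 2 t) (nablaT rho g 1 t) (tangent g t))) = vzero.

Definition geodesic (rho a b : R) (g : R -> vec3) : Prop :=
  forall t, a < t < b -> nablaT rho g 1 t = vzero.

Definition circle_with_curvature (rho a b : R) (g : R -> vec3) (kappa : R) : Prop :=
  forall t, a < t < b -> nablaT rho g 1 t = vscal kappa (Jrot rho (g t) (tangent g t)).

(* Main.v *)
Require Import Defs.
From Stdlib Require Import Reals.
From Coquelicot Require Import Coquelicot.
Open Scope R_scope.
From Stdlib Require Import Lra Lia.
Import Defs.


Lemma loc_I a b t : a < t < b -> locally t (fun s => a < s < b).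
Proof.
  intros [H1 H2].
  assert (Hp : 0 < Rmin (t - a) (b - t)) by (apply Rmin_case; lra).
  exists (mkposreal _ Hp). intros y Hy.
  change (Rabs (y - t) < Rmin (t - a) (b - t)) in Hy.
  apply Rabs_lt_between in Hy.
  pose proof (Rmin_l (t - a) (b - t)). pose proof (Rmin_r (t - a) (b - t)).
  lra.
Qed.

Lemma isd_eq (f : R -> R) x d d' : is_derive f x d -> d = d' -> is_derive f x d'.
Proof. intros H <-; exact H. Qed.
Lemma isd_plus (f h : R -> R) x df dh : is_derive f x df -> is_derive h x dh ->
  is_derive (fun s => f s + h s) x (df + dh).
Proof. intros H1 H2; exact (is_derive_plus f h x df dh H1 H2). Qed.

Lemma isd_minus (f h : R -> R) x df dh : is_derive f x df -> is_derive h x dh ->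
  is_derive (fun s => f s - h s) x (df - dh).
Proof. intros H1 H2; exact (is_derive_minus f h x df dh H1 H2). Qed.
Lemma isd_mult (f h : R -> R) x df dh : is_derive f x df -> is_derive h x dh ->
  is_derive (fun s => f s * h s) x (df * h x + f x * dh).
Proof. intros H1 H2; exact (is_derive_mult f h x df dh H1 H2 Rmult_comm). Qed.
Lemma isd_const (c x : R) : is_derive (fun _ => c) x 0.
Proof. exact (is_derive_const c x). Qed.
Lemma isd_opp (f : R -> R) x df : is_derive f x df -> is_derive (fun s => - f s) x (- df).
Proof. intros H; exact (is_derive_opp f x df H). Qed.
Lemma isd_id (x : R) : is_derive (fun s => s) x 1.
Proof. exact (is_derive_id x). Qed.

Ltac isd_core := repeat first [ eassumption | eapply isd_const | eapply isd_plus | eapply isd_minus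
  | eapply isd_mult | eapply isd_opp | eapply isd_const ].
Ltac isd := eapply isd_eq; [ isd_core | try ring ].

Lemma exd_plus (f h : R -> R) t : ex_derive f t -> ex_derive h t -> ex_derive (fun s => f s + h s) t.
Proof. intros [x Hx] [y Hy]. exists (x + y). apply isd_plus; auto. Qed.
Lemma exd_mult (f h : R -> R) t : ex_derive f t -> ex_derive h t -> ex_derive (fun s => f s * h s) t.
Proof. intros [x Hx] [y Hy]. eexists. apply isd_mult; eauto. Qed.
Lemma Der_plus (f h : R -> R) t : ex_derive f t -> ex_derive h t ->
  Derive (fun s => f s + h s) t = Derive f t + Derive h t.
Proof. intros H1 H2. apply is_derive_unique. apply isd_plus; apply Derive_correct; auto. Qed.
Lemma Der_mult (f h : R -> R) t : ex_derive f t -> ex_derive h t ->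
  Derive (fun s => f s * h s) t = Derive f t * h t + f t * Derive h t.
Proof. intros H1 H2. apply is_derive_unique. apply isd_mult; apply Derive_correct; auto. Qed.
Lemma Der_const (c t : R) : Derive (fun _ => c) t = 0.
Proof. apply is_derive_unique. apply isd_const. Qed.

Fixpoint D (a b : R) (k : nat) (f : R -> R) : Prop :=
  match k with
  | O => True
  | S k => (forall t, a < t < b -> ex_derive f t) /\ D a b k (Derive f)
  end.

Lemma D_ext a b k : forall f h, (forall t, a < t < b -> f t = h t) -> D a b k f -> D a b k h.
Proof.
  induction k as [|k IH]; simpl; auto.
  intros f h Hfh [Hex HD]; split.
  - intros t Ht. apply ex_derive_ext_loc with f; auto.
    apply filter_imp with (fun s => a < s < b); [ intros; auto | apply loc_I; auto ].
  - apply IH with (Derive f); auto.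
    intros t Ht. apply Derive_ext_loc.
    apply filter_imp with (fun s => a < s < b); [ intros; auto | apply loc_I; auto ].
Qed.

Lemma D_le a b k : forall f, D a b (S k) f -> D a b k f.
Proof.
  induction k as [|k IH]; simpl; auto.
  intros f [H1 [H2 H3]]; split; auto.
  apply IH; simpl; auto.
Qed.

Lemma D_const a b k : forall c, D a b k (fun _ => c).
Proof.
  induction k as [|k IH]; simpl; auto.
  intros c; split.
  - intros; exists 0; apply isd_const.
  - apply D_ext with (fun _ => 0); [ intros; rewrite Der_const; auto | apply IH ].
Qed.

Lemma D_plus a b k : forall f h, D a b k f -> D a b k h -> D a b k (fun s => f s + h s).
Proof.
  induction k as [|k IH]; simpl; auto.
  intros f h [Hf1 Hf2] [Hh1 Hh2]; split.
  - intros; apply exd_plus; auto.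
  - apply D_ext with (fun s => Derive f s + Derive h s); auto.
    intros t Ht; rewrite Der_plus; auto.
Qed.

Lemma D_mult a b k : forall f h, D a b k f -> D a b k h -> D a b k (fun s => f s * h s).
Proof.
  induction k as [|k IH]; simpl; auto.
  intros f h Hf Hh.
  pose proof (D_le a b k f Hf) as Hf'. pose proof (D_le a b k h Hh) as Hh'.
  destruct Hf as [Hf1 Hf2]; destruct Hh as [Hh1 Hh2]; split.
  - intros; apply exd_mult; auto.
  - apply D_ext with (fun s => Derive f s * h s + f s * Derive h s).
    + intros t Ht; rewrite Der_mult; auto.
    + apply D_plus; apply IH; auto.
Qed.

Definition SM a b f := forall k, D a b k f.

Lemma SM_plus a b f h : SM a b f -> SM a b h -> SM a b (fun s => f s + h s).
Proof. intros H1 H2 k; apply D_plus; auto. Qed.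
Lemma SM_mult a b f h : SM a b f -> SM a b h -> SM a b (fun s => f s * h s).
Proof. intros H1 H2 k; apply D_mult; auto. Qed.
Lemma SM_const a b c : SM a b (fun _ => c).
Proof. intros k; apply D_const. Qed.
Lemma SM_minus a b f h : SM a b f -> SM a b h -> SM a b (fun s => f s - h s).
Proof.
  intros H1 H2 k. apply D_ext with (fun s => f s + (-1) * h s).
  - intros; ring.
  - apply D_plus; auto. apply D_mult; auto. apply D_const.
Qed.
Lemma SM_opp a b f : SM a b f -> SM a b (fun s => - f s).
Proof.
  intros H1 k. apply D_ext with (fun s => (-1) * f s).
  - intros; ring.
  - apply D_mult; auto. apply D_const.
Qed.
Lemma SM_Derive a b f : SM a b f -> SM a b (Derive f).
Proof. intros H k. exact (proj2 (H (S k))). Qed.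
Lemma SM_ex a b f t : SM a b f -> a < t < b -> ex_derive f t.
Proof. intros H Ht. exact (proj1 (H 1%nat) t Ht). Qed.
Lemma SM_Derive_n a b f n : SM a b f -> SM a b (Derive_n f n).
Proof.
  intros H; induction n as [|n IH]; simpl.
  - exact H.
  - apply SM_Derive in IH. exact IH.
Qed.
Lemma SM_isd a b f n t : SM a b f -> a < t < b ->
  is_derive (Derive_n f n) t (Derive_n f (S n) t).
Proof.
  intros H Ht. simpl. apply Derive_correct. apply SM_ex with a b; auto.
  apply SM_Derive_n; auto.
Qed.
Lemma SM_of_smooth a b f : (forall n t, a < t < b -> ex_derive_n f n t) -> SM a b f.
Proof.
  intros H.
  assert (forall k m, D a b k (Derive_n f m)).
  { induction k as [|k IH]; simpl; auto. intros m; split.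
    - intros t Ht. exact (H (S m) t Ht).
    - exact (IH (S m)). }
  intros k. exact (H0 k 0%nat).
Qed.
Lemma SM_ext a b f h : (forall t, a < t < b -> f t = h t) -> SM a b f -> SM a b h.
Proof. intros He H k; apply D_ext with f; auto. Qed.

Ltac sm := repeat first [ assumption | apply SM_const | apply SM_plus | apply SM_minus | apply SM_mult
  | apply SM_opp | apply SM_const | apply SM_Derive ].


Definition Q0 (rho c d x : R) : R := 1*(252)*x^10 + 1*(80*rho)*x^8 + 1*(1260*c)*x^6 + 1*(420*d)*x^5 + 1*(25*rho*d)*x^3 + 1*(300*c*d)*x^1 + 1*(175*d*d)*x^0.
Definition Q1 (rho c d x : R) : R := 10*(252)*x^9 + 8*(80*rho)*x^7 + 6*(1260*c)*x^5 + 5*(420*d)*x^4 + 3*(25*rho*d)*x^2 + 1*(300*c*d)*x^0.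
Definition Q2 (rho c d x : R) : R := 90*(252)*x^8 + 56*(80*rho)*x^6 + 30*(1260*c)*x^4 + 20*(420*d)*x^3 + 6*(25*rho*d)*x^1.
Definition Q3 (rho c d x : R) : R := 720*(252)*x^7 + 336*(80*rho)*x^5 + 120*(1260*c)*x^3 + 60*(420*d)*x^2 + 6*(25*rho*d)*x^0.
Definition Q4 (rho c d x : R) : R := 5040*(252)*x^6 + 1680*(80*rho)*x^4 + 360*(1260*c)*x^2 + 120*(420*d)*x^1.
Definition Q5 (rho c d x : R) : R := 30240*(252)*x^5 + 6720*(80*rho)*x^3 + 720*(1260*c)*x^1 + 120*(420*d)*x^0.
Definition Q6 (rho c d x : R) : R := 151200*(252)*x^4 + 20160*(80*rho)*x^2 + 720*(1260*c)*x^0.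
Definition Q7 (rho c d x : R) : R := 604800*(252)*x^3 + 40320*(80*rho)*x^1.
Definition Q8 (rho c d x : R) : R := 1814400*(252)*x^2 + 40320*(80*rho)*x^0.
Definition Q9 (rho c d x : R) : R := 3628800*(252)*x^1.
Definition Q10 (rho c d x : R) : R := 3628800*(252)*x^0.
Lemma Q0_der rho c d x : is_derive (Q0 rho c d) x (Q1 rho c d x).
Proof. unfold Q0, Q1. auto_derive; [exact I | ring]. Qed.
Lemma Q1_der rho c d x : is_derive (Q1 rho c d) x (Q2 rho c d x).
Proof. unfold Q1, Q2. auto_derive; [exact I | ring]. Qed.
Lemma Q2_der rho c d x : is_derive (Q2 rho c d) x (Q3 rho c d x).
Proof. unfold Q2, Q3. auto_derive; [exact I | ring]. Qed.
Lemma Q3_der rho c d x : is_derive (Q3 rho c d) x (Q4 rho c d x).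
Proof. unfold Q3, Q4. auto_derive; [exact I | ring]. Qed.
Lemma Q4_der rho c d x : is_derive (Q4 rho c d) x (Q5 rho c d x).
Proof. unfold Q4, Q5. auto_derive; [exact I | ring]. Qed.
Lemma Q5_der rho c d x : is_derive (Q5 rho c d) x (Q6 rho c d x).
Proof. unfold Q5, Q6. auto_derive; [exact I | ring]. Qed.
Lemma Q6_der rho c d x : is_derive (Q6 rho c d) x (Q7 rho c d x).
Proof. unfold Q6, Q7. auto_derive; [exact I | ring]. Qed.
Lemma Q7_der rho c d x : is_derive (Q7 rho c d) x (Q8 rho c d x).
Proof. unfold Q7, Q8. auto_derive; [exact I | ring]. Qed.
Lemma Q8_der rho c d x : is_derive (Q8 rho c d) x (Q9 rho c d x).
Proof. unfold Q8, Q9. auto_derive; [exact I | ring]. Qed.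
Lemma Q9_der rho c d x : is_derive (Q9 rho c d) x (Q10 rho c d x).
Proof. unfold Q9, Q10. auto_derive; [exact I | ring]. Qed.

Lemma isd_cont f x d : is_derive f x d -> continuity_pt f x.
Proof.
  intros H. apply continuity_pt_filterlim. exact (ex_derive_continuous f x (ex_intro _ d H)).
Qed.

Lemma const_I a b F : (forall s, a < s < b -> is_derive F s 0) ->
  forall s u, a < s < b -> a < u < b -> F s = F u.
Proof.
  intros HF s u Hs Hu.
  destruct (MVT_gen F s u (fun _ => 0)) as [c [Hc Heq]].
  - intros x Hx. apply HF. pose proof (Rmin_l s u); pose proof (Rmin_r s u).
    pose proof (Rmax_l s u); pose proof (Rmax_r s u).
    destruct (Rle_dec s u).
    + rewrite Rmin_left in Hx by lra; rewrite Rmax_right in Hx by lra; lra.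
    + rewrite Rmin_right in Hx by lra; rewrite Rmax_left in Hx by lra; lra.
  - intros x Hx. apply isd_cont with 0. apply HF.
    destruct (Rle_dec s u).
    + rewrite Rmin_left in Hx by lra; rewrite Rmax_right in Hx by lra; lra.
    + rewrite Rmin_right in Hx by lra; rewrite Rmax_left in Hx by lra; lra.
  - lra.
Qed.

Lemma loc_zero_deriv a b f t l : (forall s, a < s < b -> f s = 0) -> a < t < b ->
  is_derive f t l -> l = 0.
Proof.
  intros H Ht Hd.
  assert (H0 : is_derive f t 0).
  { apply is_derive_ext_loc with (fun _ => 0).
    - apply filter_imp with (fun s => a < s < b); [ intros; symmetry; auto | apply loc_I; auto ].
    - apply isd_const. }
  apply is_derive_unique in Hd. apply is_derive_unique in H0. congruence.
Qed.

Lemma chain_step u1 u2 (k0 k1 P P' : R -> R) :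
  (forall t, u1 < t < u2 -> P (k0 t) = 0) -> (forall x, is_derive P x (P' x)) ->
  (forall t, u1 < t < u2 -> is_derive k0 t (k1 t)) -> (forall t, u1 < t < u2 -> k1 t <> 0) ->
  forall t, u1 < t < u2 -> P' (k0 t) = 0.
Proof.
  intros HP HD Hk Hne t Ht.
  pose proof (is_derive_comp P k0 t _ _ (HD (k0 t)) (Hk t Ht)) as H1.
  assert (H2 : scal (k1 t) (P' (k0 t)) = 0).
  { apply loc_zero_deriv with u1 u2 (fun s => P (k0 s)) t; auto. }
  change (k1 t * P' (k0 t) = 0) in H2.
  apply Rmult_integral in H2. destruct H2 as [H2|H2]; auto. exfalso; apply (Hne t Ht H2).
Qed.

Lemma isd_pow2 (f : R -> R) x df n : is_derive f x df ->
  is_derive (fun s => f s ^ n) x (INR n * df * f x ^ Init.Nat.pred n).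
Proof. apply is_derive_pow. Qed.

Lemma isd_divc (f : R -> R) x df c : is_derive f x df ->
  is_derive (fun s => f s / c) x (df / c).
Proof. intros H. unfold Rdiv. eapply isd_eq. apply isd_mult. exact H. apply isd_const. simpl; ring. Qed.

Ltac isd_step := match goal with
 | |- is_derive (fun _ => ?c) _ _ => eapply isd_const
 | |- is_derive (fun s => _ + _) _ _ => eapply isd_plus
 | |- is_derive (fun s => _ - _) _ _ => eapply isd_minus
 | |- is_derive (fun s => _ * _) _ _ => eapply isd_mult
 | |- is_derive (fun s => - _) _ _ => eapply isd_opp
 | |- is_derive (fun s => _ ^ _) _ _ => eapply isd_pow2
 | |- is_derive (fun s => _ / _) _ _ => eapply isd_divc
 | |- is_derive _ _ _ => eassumption
end.
Ltac isdp := eapply isd_eq; [ repeat isd_step | cbv beta; simpl pred; rewrite ?INR_IZR_INZ; simpl Z.of_nat;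
  match goal with |- ?x = ?y => change (@eq R x y) end ].

Lemma ode a b rho (k0 k1 k2 k3 k4 : R -> R) : a < b ->
  (forall s, a < s < b -> is_derive k0 s (k1 s)) ->
  (forall s, a < s < b -> is_derive k1 s (k2 s)) ->
  (forall s, a < s < b -> is_derive k2 s (k3 s)) ->
  (forall s, a < s < b -> is_derive k3 s (k4 s)) ->
  (forall s, a < s < b -> -5 * k0 s * k3 s - 10 * k1 s * k2 s + 10 * k0 s ^ 3 * k1 s = 0) ->
  (forall s, a < s < b -> k4 s - 15 * k0 s * k1 s ^ 2 - 10 * k0 s ^ 2 * k2 s + k0 s ^ 5
                          + rho * (k2 s - 2 * k0 s ^ 3) = 0) ->
  exists C, (forall s, a < s < b -> k0 s = C) /\ C ^ 5 - 2 * rho * C ^ 3 = 0.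
Proof.
  intros Hab H0 H1 H2 H3 HA HN.
  set (m := (a + b) / 2).
  assert (Hm : a < m < b) by (unfold m; lra).
  assert (HA2 : forall s, a < s < b -> -5 * k0 s * k4 s - 15 * k1 s * k3 s - 10 * k2 s ^ 2
              + 30 * k0 s ^ 2 * k1 s ^ 2 + 10 * k0 s ^ 3 * k2 s = 0).
  { intros s Hs.
    assert (Hd : is_derive (fun s => -5 * k0 s * k3 s - 10 * k1 s * k2 s + 10 * k0 s ^ 3 * k1 s) s
       (-5 * k0 s * k4 s - 15 * k1 s * k3 s - 10 * k2 s ^ 2
              + 30 * k0 s ^ 2 * k1 s ^ 2 + 10 * k0 s ^ 3 * k2 s)).
    { pose proof (H0 s Hs); pose proof (H1 s Hs); pose proof (H2 s Hs); pose proof (H3 s Hs).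
      isdp. ring. }
    exact (loc_zero_deriv a b _ s _ (fun u Hu => HA u Hu) Hs Hd). }
  set (cf := fun s => k0 s * k2 s + k1 s ^ 2 / 2 - k0 s ^ 4 / 2).
  assert (Hc : forall s, a < s < b -> cf s = cf m).
  { intros s0 Hs0. apply (const_I a b cf); auto. intros s Hs.
    pose proof (H0 s Hs); pose proof (H1 s Hs); pose proof (H2 s Hs); pose proof (H3 s Hs).
    unfold cf. isdp.
    specialize (HA s Hs). lra. }
  set (c0 := cf m).
  set (df := fun s => k0 s * (k1 s ^ 2 - 2 * c0 - k0 s ^ 4 / 5)).
  assert (Hd : forall s, a < s < b -> df s = df m).
  { intros s0 Hs0. apply (const_I a b df); auto. intros s Hs.
    pose proof (H0 s Hs); pose proof (H1 s Hs); pose proof (H2 s Hs); pose proof (H3 s Hs).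
    unfold df. isdp.
    specialize (Hc s Hs). unfold cf in Hc. fold c0 in Hc.
    transitivity (k1 s * (2 * (k0 s * k2 s + k1 s ^ 2 / 2 - k0 s ^ 4 / 2) - 2 * c0)); [field|].
    rewrite Hc. unfold c0, cf. ring. }
  set (d0 := df m).
  assert (HQ : forall s, a < s < b -> Q0 rho c0 d0 (k0 s) = 0).
  { intros s Hs.
    specialize (Hc s Hs); specialize (Hd s Hs); specialize (HA s Hs); specialize (HA2 s Hs);
    specialize (HN s Hs). fold c0 in Hc; fold d0 in Hd. unfold cf in Hc; unfold df in Hd.
    set (x0 := k0 s) in *; set (x1 := k1 s) in *; set (x2 := k2 s) in *;
    set (x3 := k3 s) in *; set (x4 := k4 s) in *.
    unfold Q0.
    destruct (Req_dec x0 0) as [Hz|Hz].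
    - rewrite Hz in *. assert (d0 = 0) by (rewrite <- Hd; field). rewrite H. ring.
    -
      set (rd := 5*x0*x1^2 - 10*c0*x0 - x0^5 - 5*d0).
      set (rc := 2*x0*x2 + x1^2 - x0^4 - 2*c0).
      set (rA := x0*x3 + 2*x1*x2 - 2*x0^3*x1).
      set (rA2 := x0*x4 + 3*x1*x3 + 2*x2^2 - 6*x0^2*x1^2 - 2*x0^3*x2).
      set (rN := x4 - 15*x0*x1^2 - 10*x0^2*x2 + x0^5 + rho*x2 - 2*rho*x0^3).
      assert (Erd : rd = 0) by (unfold rd; rewrite <- Hd; field).
      assert (Erc : rc = 0) by (unfold rc; rewrite <- Hc; field).
      assert (ErA : rA = 0) by (unfold rA; lra).
      assert (ErA2 : rA2 = 0) by (unfold rA2; lra).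
      assert (ErN : rN = 0) by (unfold rN; lra).
      assert (Hid : (-350)*x0*d0^2 + (-600)*x0^2*c0*d0 + (-50)*x0^4*d0*rho + (-840)*x0^6*d0
         + (-2520)*x0^7*c0 + (-160)*x0^9*rho + (-504)*x0^11
         = 100*x0^6 * rN
           - (((-70)*x0*d0 + (20)*x0^2*c0 + (-70)*x0^2*x1^2 + (-10)*x0^4*rho + (-154)*x0^6) * rd
              + ((-100)*x0^3*c0 + (350)*x0^3*x1^2 + (-100)*x0^4*x2 + (50)*x0^5*rho + (-450)*x0^7) * rc
              + ((-300)*x0^4*x1) * rA + (100*x0^5) * rA2)).
      { unfold rN, rd, rc, rA, rA2. ring. }
      rewrite Erd, Erc, ErA, ErA2, ErN in Hid.
      match goal with |- ?L = 0 =>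
        assert (Hz2 : (-2 * x0) * L = 0) end.
      { match type of Hid with ?E = _ => transitivity E end; [ring | rewrite Hid; ring]. }
      apply Rmult_integral in Hz2. destruct Hz2 as [Hz2|Hz2]; [lra | exact Hz2]. }
  assert (Hk1 : forall s, a < s < b -> k1 s = 0).
  { intros t0 Ht0. destruct (Req_dec (k1 t0) 0) as [|Hne]; auto. exfalso.
    pose proof (isd_cont k1 t0 (k2 t0) (H1 t0 Ht0)) as Hct.
    destruct (Hct (Rabs (k1 t0)) (Rabs_pos_lt _ Hne)) as [del [Hdel Hx]].
    set (u1 := Rmax a (t0 - del)). set (u2 := Rmin b (t0 + del)).
    assert (HU : forall t, u1 < t < u2 -> a < t < b /\ k1 t <> 0).
    { intros t [Ht1 Ht2]. unfold u1, u2 in *.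
      assert (a < t) by (eapply Rle_lt_trans; [apply Rmax_l | exact Ht1]).
      assert (t0 - del < t) by (eapply Rle_lt_trans; [apply Rmax_r | exact Ht1]).
      assert (t < b) by (eapply Rlt_le_trans; [exact Ht2 | apply Rmin_l]).
      assert (t < t0 + del) by (eapply Rlt_le_trans; [exact Ht2 | apply Rmin_r]).
      split; [lra|]. intros Hk.
      destruct (Req_dec t t0) as [->|Hneq]; [exact (Hne Hk)|].
      assert (Hx' : R_dist (k1 t) (k1 t0) < Rabs (k1 t0)).
      { apply (Hx t). split. split. constructor. auto.
        unfold R_dist. apply Rabs_def1; lra. }
      unfold R_dist in Hx'. rewrite Hk in Hx'. rewrite Rminus_0_l, Rabs_Ropp in Hx'. lra. }
    assert (Ht0U : u1 < t0 < u2).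
    { unfold u1, u2. split. apply Rmax_lub_lt; lra. apply Rmin_glb_lt; lra. }
    assert (Hd0 : forall t, u1 < t < u2 -> is_derive k0 t (k1 t)) by (intros t Ht; apply H0; apply HU; auto).
    assert (Hne' : forall t, u1 < t < u2 -> k1 t <> 0) by (intros t Ht; apply HU; auto).
    assert (P0 : forall t, u1 < t < u2 -> Q0 rho c0 d0 (k0 t) = 0) by (intros t Ht; apply HQ; apply HU; auto).
    pose proof (chain_step u1 u2 k0 k1 _ _ P0 (Q0_der rho c0 d0) Hd0 Hne') as P1.
    pose proof (chain_step u1 u2 k0 k1 _ _ P1 (Q1_der rho c0 d0) Hd0 Hne') as P2.
    pose proof (chain_step u1 u2 k0 k1 _ _ P2 (Q2_der rho c0 d0) Hd0 Hne') as P3.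
    pose proof (chain_step u1 u2 k0 k1 _ _ P3 (Q3_der rho c0 d0) Hd0 Hne') as P4.
    pose proof (chain_step u1 u2 k0 k1 _ _ P4 (Q4_der rho c0 d0) Hd0 Hne') as P5.
    pose proof (chain_step u1 u2 k0 k1 _ _ P5 (Q5_der rho c0 d0) Hd0 Hne') as P6.
    pose proof (chain_step u1 u2 k0 k1 _ _ P6 (Q6_der rho c0 d0) Hd0 Hne') as P7.
    pose proof (chain_step u1 u2 k0 k1 _ _ P7 (Q7_der rho c0 d0) Hd0 Hne') as P8.
    pose proof (chain_step u1 u2 k0 k1 _ _ P8 (Q8_der rho c0 d0) Hd0 Hne') as P9.
    pose proof (chain_step u1 u2 k0 k1 _ _ P9 (Q9_der rho c0 d0) Hd0 Hne') as P10.
    specialize (P10 t0 Ht0U). unfold Q10 in P10. lra. }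
  exists (k0 m). split.
  - intros s Hs. apply (const_I a b k0); auto. intros u Hu. rewrite <- (Hk1 u Hu). auto.
  - assert (Hk2 : forall s, a < s < b -> k2 s = 0).
    { intros s Hs. exact (loc_zero_deriv a b k1 s _ Hk1 Hs (H1 s Hs)). }
    assert (Hk3 : forall s, a < s < b -> k3 s = 0).
    { intros s Hs. exact (loc_zero_deriv a b k2 s _ Hk2 Hs (H2 s Hs)). }
    assert (Hk4 : forall s, a < s < b -> k4 s = 0).
    { intros s Hs. exact (loc_zero_deriv a b k3 s _ Hk3 Hs (H3 s Hs)). }
    specialize (HN m Hm). rewrite (Hk1 m Hm), (Hk2 m Hm), (Hk4 m Hm) in HN.
    rewrite <- HN. ring.
Qed.


Lemma eps_cases rho : eps rho = 1 \/ eps rho = -1.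
Proof. unfold eps; destruct (Rlt_dec rho 0); auto. Qed.

Lemma veq u v : c1 u = c1 v -> c2 u = c2 v -> c3 u = c3 v -> u = v.
Proof. destruct u, v; simpl; intros; subst; auto. Qed.

Ltac vsimp := unfold vsub, vadd, vscal, ip, cross, curvR in *; simpl in *.

Lemma ip_vadd_l e u v w : ip e (vadd u v) w = ip e u w + ip e v w.
Proof. vsimp; ring. Qed.
Lemma ip_vscal_l e a u w : ip e (vscal a u) w = a * ip e u w.
Proof. vsimp; ring. Qed.
Lemma ip_vsub_l e u v w : ip e (vsub u v) w = ip e u w - ip e v w.
Proof. vsimp; ring. Qed.
Lemma ip_vadd_r e u v w : ip e w (vadd u v) = ip e w u + ip e w v.
Proof. vsimp; ring. Qed.
Lemma ip_vscal_r e a u w : ip e w (vscal a u) = a * ip e w u.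
Proof. vsimp; ring. Qed.
Lemma ip_sym e u v : ip e u v = ip e v u.
Proof. vsimp; ring. Qed.

Definition VSM a b (V : R -> vec3) :=
  SM a b (fun s => c1 (V s)) /\ SM a b (fun s => c2 (V s)) /\ SM a b (fun s => c3 (V s)).

Lemma VSM_vadd a b U W : VSM a b U -> VSM a b W -> VSM a b (fun s => vadd (U s) (W s)).
Proof. intros [? [? ?]] [? [? ?]]; repeat split; simpl; sm. Qed.
Lemma VSM_vscal a b f W : SM a b f -> VSM a b W -> VSM a b (fun s => vscal (f s) (W s)).
Proof. intros ? [? [? ?]]; repeat split; simpl; sm. Qed.
Lemma VSM_vsub a b U W : VSM a b U -> VSM a b W -> VSM a b (fun s => vsub (U s) (W s)).
Proof. intros [? [? ?]] [? [? ?]]; repeat split; simpl; sm. Qed.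
Lemma VSM_const a b v : VSM a b (fun _ => v).
Proof. repeat split; apply SM_const. Qed.
Lemma VSM_cross a b e U W : VSM a b U -> VSM a b W -> VSM a b (fun s => cross e (U s) (W s)).
Proof. intros [? [? ?]] [? [? ?]]; repeat split; simpl; sm. Qed.
Lemma SM_ip a b e U W : VSM a b U -> VSM a b W -> SM a b (fun s => ip e (U s) (W s)).
Proof. intros [? [? ?]] [? [? ?]]; unfold ip; sm. Qed.
Lemma VSM_vderiv a b V : VSM a b V -> VSM a b (vderiv V).
Proof. intros [? [? ?]]; repeat split; simpl; apply SM_Derive; auto. Qed.
Lemma VSM_ext a b U W : (forall s, a < s < b -> U s = W s) -> VSM a b U -> VSM a b W.
Proof.
  intros He [H1 [H2 H3]]; repeat split.
  - apply SM_ext with (fun s => c1 (U s)); auto. intros t Ht; rewrite He; auto.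
  - apply SM_ext with (fun s => c2 (U s)); auto. intros t Ht; rewrite He; auto.
  - apply SM_ext with (fun s => c3 (U s)); auto. intros t Ht; rewrite He; auto.
Qed.

Definition vis_derive (V : R -> vec3) t W :=
  is_derive (fun s => c1 (V s)) t (c1 W) /\ is_derive (fun s => c2 (V s)) t (c2 W) /\
  is_derive (fun s => c3 (V s)) t (c3 W).

Lemma VSM_vis a b V t : VSM a b V -> a < t < b -> vis_derive V t (vderiv V t).
Proof.
  intros [H1 [H2 H3]] Ht; repeat split; simpl; apply Derive_correct; eapply SM_ex; eauto.
Qed.

Lemma vis_unique V t W : vis_derive V t W -> vderiv V t = W.
Proof.
  intros [H1 [H2 H3]]. apply veq; simpl; apply is_derive_unique; auto.
Qed.

Lemma ip_isd e V W t V' W' : vis_derive V t V' -> vis_derive W t W' ->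
  is_derive (fun s => ip e (V s) (W s)) t (ip e V' (W t) + ip e (V t) W').
Proof.
  intros [H1 [H2 H3]] [H4 [H5 H6]]. unfold ip. isdp. ring.
Qed.


Definition Nf rho g s := Jrot rho (g s) (tangent g s).
Definition kap rho g s := ip (eps rho) (nablaT rho g 1 s) (Nf rho g s).
Definition lin rho g f h s := vadd (vscal f (tangent g s)) (vscal h (Nf rho g s)).
Definition Hyp rho a b g := smooth_on a b g /\ (forall t, a < t < b -> in_space_form rho (g t))
  /\ arc_length rho a b g.
Definition Pj rho x W := vsub W (vscal (rho * ip (eps rho) W x) x).

Lemma nabla_Pj rho g V t : nabla rho g V t = Pj rho (g t) (vderiv V t).
Proof. reflexivity. Qed.

Lemma normalv_cases rho : (rho = 0 /\ forall x, normalv rho x = V3 0 0 1) \/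
  (rho <> 0 /\ forall x, normalv rho x = vscal (sqrt (Rabs rho)) x).
Proof. unfold normalv; destruct (Req_EM_T rho 0); auto. Qed.

Lemma sf_cases rho x : in_space_form rho x ->
  (rho = 0 /\ c3 x = 0) \/ (rho <> 0 /\ ip (eps rho) x x = / rho).
Proof. unfold in_space_form; destruct (Req_EM_T rho 0); auto. Qed.

Lemma loc_const_deriv a b f C t l : (forall s, a < s < b -> f s = C) -> a < t < b ->
  is_derive f t l -> l = 0.
Proof.
  intros H Ht Hd.
  assert (Hd' : is_derive (fun s => f s - C) t (l - 0)) by (apply isd_minus; [exact Hd | apply isd_const]).
  assert (l - 0 = 0).
  { apply (loc_zero_deriv a b (fun s => f s - C) t); auto. intros s Hs; rewrite H; auto; ring. }
  lra.
Qed.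

Lemma Der_loc0 a b f t : (forall s, a < s < b -> f s = 0) -> a < t < b -> Derive f t = 0.
Proof.
  intros H Ht. rewrite (Derive_ext_loc f (fun _ => 0)). apply Der_const.
  apply filter_imp with (fun s => a < s < b); [ intros; auto | apply loc_I; auto ].
Qed.


Lemma VSM_g rho a b g : Hyp rho a b g -> VSM a b g.
Proof.
  intros [Hs _]; repeat split; apply SM_of_smooth; intros n t Ht;
    destruct (Hs n t Ht) as [? [? ?]]; auto.
Qed.

Lemma VSM_T rho a b g : Hyp rho a b g -> VSM a b (tangent g).
Proof. intros H. apply VSM_vderiv. eapply VSM_g; eauto. Qed.

Lemma VSM_n rho a b g : Hyp rho a b g -> VSM a b (fun s => normalv rho (g s)).
Proof.
  intros H. destruct (normalv_cases rho) as [[_ Hn]|[_ Hn]].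
  - apply VSM_ext with (fun _ => V3 0 0 1). intros; rewrite Hn; auto. apply VSM_const.
  - apply VSM_ext with (fun s => vscal (sqrt (Rabs rho)) (g s)). intros; rewrite Hn; auto.
    apply VSM_vscal. apply SM_const. eapply VSM_g; eauto.
Qed.

Lemma VSM_N rho a b g : Hyp rho a b g -> VSM a b (Nf rho g).
Proof.
  intros H. unfold Nf, Jrot. apply VSM_cross. eapply VSM_n; eauto. eapply VSM_T; eauto.
Qed.

Lemma VSM_nabla rho a b g V : Hyp rho a b g -> VSM a b V -> VSM a b (nabla rho g V).
Proof.
  intros H HV. unfold nabla. apply VSM_vsub. apply VSM_vderiv; auto.
  apply VSM_vscal. apply SM_mult. apply SM_const. apply SM_ip. apply VSM_vderiv; auto.
  eapply VSM_g; eauto. eapply VSM_g; eauto.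
Qed.

Lemma VSM_nablaT rho a b g k : Hyp rho a b g -> VSM a b (nablaT rho g k).
Proof.
  intros H. induction k as [|k IH]; simpl. eapply VSM_T; eauto. apply VSM_nabla; auto.
Qed.

Lemma SM_kap rho a b g : Hyp rho a b g -> SM a b (kap rho g).
Proof.
  intros H. unfold kap. apply SM_ip. apply VSM_nablaT; auto. apply VSM_N; auto.
Qed.

Lemma A_nn rho x : in_space_form rho x ->
  ip (eps rho) (normalv rho x) (normalv rho x) = eps rho.
Proof.
  intros Hx. destruct (normalv_cases rho) as [[H0 Hn]|[H0 Hn]]; rewrite Hn.
  - unfold ip; simpl; ring.
  - destruct (sf_cases rho x Hx) as [[? ?]|[_ Hxx]]; [contradiction|].
    rewrite ip_vscal_l, ip_vscal_r, Hxx.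
    assert (Hs : sqrt (Rabs rho) * sqrt (Rabs rho) = Rabs rho) by (apply sqrt_sqrt; apply Rabs_pos).
    transitivity (sqrt (Rabs rho) * sqrt (Rabs rho) * / rho); [ring|]. rewrite Hs.
    unfold eps. destruct (Rlt_dec rho 0).
    + rewrite Rabs_left by lra. field; auto.
    + rewrite Rabs_right by lra. field; auto.
Qed.

Lemma A_tan rho x V : ip (eps rho) V (normalv rho x) = 0 -> rho * ip (eps rho) V x = 0.
Proof.
  intros H. destruct (normalv_cases rho) as [[H0 Hn]|[H0 Hn]].
  - rewrite H0; ring.
  - rewrite Hn, ip_vscal_r in H. apply Rmult_integral in H. destruct H as [H|H].
    + exfalso. assert (0 < sqrt (Rabs rho)) by (apply sqrt_lt_R0; apply Rabs_pos_lt; auto). lra.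
    + rewrite H; ring.
Qed.

Lemma A_Ptan rho x W : in_space_form rho x -> rho <> 0 ->
  ip (eps rho) (Pj rho x W) (normalv rho x) = 0.
Proof.
  intros Hx H0. destruct (normalv_cases rho) as [[H1 Hn]|[H1 Hn]]; [contradiction|].
  destruct (sf_cases rho x Hx) as [[? ?]|[_ Hxx]]; [contradiction|].
  rewrite Hn. unfold Pj. rewrite ip_vscal_r, ip_vsub_l, ip_vscal_l, Hxx. field; auto.
Qed.

Lemma A_P0 rho x W : rho = 0 -> Pj rho x W = W.
Proof. intros ->. apply veq; unfold Pj; vsimp; ring. Qed.

Lemma A_Pid rho x W : rho * ip (eps rho) W x = 0 -> Pj rho x W = W.
Proof. intros H. unfold Pj. rewrite H. apply veq; vsimp; ring. Qed.

Lemma eps_sq rho : eps rho = 1 \/ eps rho = -1.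
Proof. apply eps_cases. Qed.

Lemma cross_dec1 e n T V : e = 1 \/ e = -1 ->
  ip e V (cross e n T) * c1 (cross e n T) = e * ((ip e n n * ip e T T - ip e n T * ip e n T) * c1 V - ip e n n * ip e V T * c1 T - ip e T T * ip e V n * c1 n
     + ip e n T * (ip e V n * c1 T + ip e V T * c1 n)).
Proof. intros [-> | ->]; destruct n as [n1 n2 n3], T as [t1 t2 t3], V as [v1 v2 v3]; unfold ip, cross; simpl; ring. Qed.
Lemma cross_dec2 e n T V : e = 1 \/ e = -1 ->
  ip e V (cross e n T) * c2 (cross e n T) = e * ((ip e n n * ip e T T - ip e n T * ip e n T) * c2 V - ip e n n * ip e V T * c2 T - ip e T T * ip e V n * c2 n
     + ip e n T * (ip e V n * c2 T + ip e V T * c2 n)).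
Proof. intros [-> | ->]; destruct n as [n1 n2 n3], T as [t1 t2 t3], V as [v1 v2 v3]; unfold ip, cross; simpl; ring. Qed.
Lemma cross_dec3 e n T V : e = 1 \/ e = -1 ->
  ip e V (cross e n T) * c3 (cross e n T) = e * ((ip e n n * ip e T T - ip e n T * ip e n T) * c3 V - ip e n n * ip e V T * c3 T - ip e T T * ip e V n * c3 n
     + ip e n T * (ip e V n * c3 T + ip e V T * c3 n)).
Proof. intros [-> | ->]; destruct n as [n1 n2 n3], T as [t1 t2 t3], V as [v1 v2 v3]; unfold ip, cross; simpl; ring. Qed.
Lemma cross_NN e n T : e = 1 \/ e = -1 ->
  ip e (cross e n T) (cross e n T) = e * (ip e n n * ip e T T - ip e n T * ip e n T).
Proof. intros [-> | ->]; destruct n as [n1 n2 n3], T as [t1 t2 t3]; unfold ip, cross; simpl; ring. Qed.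
Lemma cross_Nn e n T : e = 1 \/ e = -1 -> ip e (cross e n T) n = 0.
Proof. intros [-> | ->]; destruct n as [n1 n2 n3], T as [t1 t2 t3]; unfold ip, cross; simpl; ring. Qed.
Lemma cross_NT e n T : e = 1 \/ e = -1 -> ip e (cross e n T) T = 0.
Proof. intros [-> | ->]; destruct n as [n1 n2 n3], T as [t1 t2 t3]; unfold ip, cross; simpl; ring. Qed.

Lemma cross_props e n T : e = 1 \/ e = -1 -> ip e n n = e -> ip e T T = 1 -> ip e T n = 0 ->
  ip e (cross e n T) n = 0 /\ ip e (cross e n T) T = 0 /\ ip e (cross e n T) (cross e n T) = 1 /\
  (forall V, ip e V n = 0 ->
     V = vadd (vscal (ip e V T) T) (vscal (ip e V (cross e n T)) (cross e n T))).
Proof.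
  intros He Hnn HTT HTn.
  assert (HnT : ip e n T = 0) by (rewrite ip_sym; auto).
  assert (Hee : e * e = 1) by (destruct He as [-> | ->]; ring).
  split; [apply cross_Nn; auto|]. split; [apply cross_NT; auto|].
  split. { rewrite cross_NN, Hnn, HTT, HnT; auto. lra. }
  intros V HVn. set (N := cross e n T). apply veq.
  - change (c1 V = ip e V T * c1 T + ip e V N * c1 N).
    pose proof (cross_dec1 e n T V He) as Hd. fold N in Hd. rewrite Hnn, HTT, HnT, HVn in Hd.
    rewrite Hd. transitivity ((e * e) * c1 V + ip e V T * c1 T * (1 - e * e)); [rewrite Hee; ring | ring].
  - change (c2 V = ip e V T * c2 T + ip e V N * c2 N).
    pose proof (cross_dec2 e n T V He) as Hd. fold N in Hd. rewrite Hnn, HTT, HnT, HVn in Hd.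
    rewrite Hd. transitivity ((e * e) * c2 V + ip e V T * c2 T * (1 - e * e)); [rewrite Hee; ring | ring].
  - change (c3 V = ip e V T * c3 T + ip e V N * c3 N).
    pose proof (cross_dec3 e n T V He) as Hd. fold N in Hd. rewrite Hnn, HTT, HnT, HVn in Hd.
    rewrite Hd. transitivity ((e * e) * c3 V + ip e V T * c3 T * (1 - e * e)); [rewrite Hee; ring | ring].
Qed.


Lemma L_c3T0 rho a b g : Hyp rho a b g -> rho = 0 -> forall s, a < s < b -> c3 (tangent g s) = 0.
Proof.
  intros [_ [Hsf _]] H0 s Hs. change (Derive (fun u => c3 (g u)) s = 0).
  apply Der_loc0 with a b; auto. intros u Hu.
  destruct (sf_cases rho (g u) (Hsf u Hu)) as [[_ ?]|[? _]]; auto; contradiction.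
Qed.

Lemma L_TT rho a b g : Hyp rho a b g -> forall s, a < s < b ->
  ip (eps rho) (tangent g s) (tangent g s) = 1.
Proof. intros [_ [_ Hal]] s Hs. apply Hal; auto. Qed.

Lemma L_Tn rho a b g : Hyp rho a b g -> forall s, a < s < b ->
  ip (eps rho) (tangent g s) (normalv rho (g s)) = 0.
Proof.
  intros H s Hs. destruct (normalv_cases rho) as [[H0 Hn]|[H0 Hn]].
  - rewrite Hn. unfold ip; cbn [c1 c2 c3]. rewrite (L_c3T0 rho a b g H H0 s Hs). ring.
  - rewrite Hn, ip_vscal_r.
    assert (Hv : vis_derive g s (tangent g s)) by (apply VSM_vis with a b; auto; eapply VSM_g; eauto).
    pose proof (ip_isd (eps rho) g g s _ _ Hv Hv) as Hd.
    assert (Hz : ip (eps rho) (tangent g s) (g s) + ip (eps rho) (g s) (tangent g s) = 0).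
    { apply (loc_const_deriv a b (fun u => ip (eps rho) (g u) (g u)) (/ rho) s); auto. intros u Hu.
      destruct H as [_ [Hsf _]].
      destruct (sf_cases rho (g u) (Hsf u Hu)) as [[? _]|[_ ?]]; auto; contradiction. }
    rewrite (ip_sym _ (g s)) in Hz. assert (ip (eps rho) (tangent g s) (g s) = 0) by lra.
    rewrite H1; ring.
Qed.

Lemma L_Nprops rho a b g : Hyp rho a b g -> forall s, a < s < b ->
  let e := eps rho in let T := tangent g s in let N := Nf rho g s in
  ip e N (normalv rho (g s)) = 0 /\ ip e N T = 0 /\ ip e N N = 1 /\
  (forall V, ip e V (normalv rho (g s)) = 0 -> V = vadd (vscal (ip e V T) T) (vscal (ip e V N) N)).
Proof.
  intros H s Hs. unfold Nf, Jrot. apply cross_props.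
  - apply eps_cases.
  - destruct H as [_ [Hsf _]]. apply A_nn; auto.
  - eapply L_TT; eauto.
  - eapply L_Tn; eauto.
Qed.

Lemma L_TdT rho a b g : Hyp rho a b g -> forall s, a < s < b ->
  ip (eps rho) (vderiv (tangent g) s) (tangent g s) = 0.
Proof.
  intros H s Hs.
  assert (Hv : vis_derive (tangent g) s (vderiv (tangent g) s))
    by (apply VSM_vis with a b; auto; eapply VSM_T; eauto).
  pose proof (ip_isd (eps rho) _ _ s _ _ Hv Hv) as Hd.
  assert (Hz : ip (eps rho) (vderiv (tangent g) s) (tangent g s)
             + ip (eps rho) (tangent g s) (vderiv (tangent g) s) = 0).
  { apply (loc_const_deriv a b (fun u => ip (eps rho) (tangent g u) (tangent g u)) 1 s); auto. intros u Hu. eapply L_TT; eauto. }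
  rewrite (ip_sym _ (tangent g s)) in Hz. lra.
Qed.

Lemma L_nab1 rho a b g : Hyp rho a b g -> forall s, a < s < b ->
  nablaT rho g 1 s = lin rho g 0 (kap rho g s) s.
Proof.
  intros H s Hs.
  destruct (L_Nprops rho a b g H s Hs) as [HNn [HNT [HNN Hdec]]].
  assert (Htan : ip (eps rho) (nablaT rho g 1 s) (normalv rho (g s)) = 0).
  { change (nablaT rho g 1 s) with (nabla rho g (tangent g) s). rewrite nabla_Pj.
    destruct (Req_dec rho 0) as [H0|H0].
    - rewrite A_P0 by auto. destruct (normalv_cases rho) as [[_ Hn]|[? _]]; [|contradiction].
      rewrite Hn. unfold ip; cbn [c1 c2 c3].
      change (c3 (vderiv (tangent g) s)) with (Derive (fun u => c3 (tangent g u)) s).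
      rewrite (Der_loc0 a b (fun u => c3 (tangent g u)) s); auto; [ring|].
      intros; eapply L_c3T0; eauto.
    - apply A_Ptan; auto. destruct H as [_ [Hsf _]]; auto. }
  rewrite (Hdec _ Htan). unfold lin, kap. f_equal. f_equal.
  change (nablaT rho g 1 s) with (nabla rho g (tangent g) s). rewrite nabla_Pj. unfold Pj.
  rewrite ip_vsub_l, ip_vscal_l.
  rewrite (L_TdT rho a b g H s Hs).
  pose proof (A_tan rho (g s) _ (L_Tn rho a b g H s Hs)) as Ht.
  rewrite (ip_sym _ (g s)). transitivity (- (ip (eps rho) (vderiv (tangent g) s) (g s)) * (rho * ip (eps rho) (tangent g s) (g s))); [ring|].
  rewrite Ht; ring.
Qed.


Lemma Pj_split rho x W : W = vadd (Pj rho x W) (vscal (rho * ip (eps rho) W x) x).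
Proof. apply veq; unfold Pj; vsimp; ring. Qed.

Lemma L_nabN rho a b g : Hyp rho a b g -> forall s, a < s < b ->
  nabla rho g (Nf rho g) s = lin rho g (- kap rho g s) 0 s.
Proof.
  intros H s Hs.
  destruct (L_Nprops rho a b g H s Hs) as [HNn [HNT [HNN Hdec]]].
  assert (Htan : ip (eps rho) (nabla rho g (Nf rho g) s) (normalv rho (g s)) = 0).
  { rewrite nabla_Pj.
    destruct (Req_dec rho 0) as [H0|H0].
    - rewrite A_P0 by auto. destruct (normalv_cases rho) as [[_ Hn]|[? _]]; [|contradiction].
      rewrite Hn. unfold ip; cbn [c1 c2 c3].
      change (c3 (vderiv (Nf rho g) s)) with (Derive (fun u => c3 (Nf rho g u)) s).
      rewrite (Der_loc0 a b (fun u => c3 (Nf rho g u)) s); auto; [ring|].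
      intros u Hu. unfold Nf, Jrot. rewrite Hn. unfold cross; cbn [c1 c2 c3]. ring.
    - apply A_Ptan; auto. destruct H as [_ [Hsf _]]; auto. }
  rewrite (Hdec _ Htan). unfold lin. rewrite nabla_Pj. unfold Pj.
  rewrite !ip_vsub_l, !ip_vscal_l.
  set (W := vderiv (Nf rho g) s).
  assert (HvN : vis_derive (Nf rho g) s W) by (apply VSM_vis with a b; auto; eapply VSM_N; eauto).
  assert (HvT : vis_derive (tangent g) s (vderiv (tangent g) s))
    by (apply VSM_vis with a b; auto; eapply VSM_T; eauto).
  pose proof (A_tan rho (g s) _ (L_Tn rho a b g H s Hs)) as Ht.
  pose proof (A_tan rho (g s) _ HNn) as Hn.
  rewrite (ip_sym _ (g s) (tangent g s)), (ip_sym _ (g s) (Nf rho g s)).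
  assert (HWN : ip (eps rho) W (Nf rho g s) = 0).
  { pose proof (ip_isd (eps rho) _ _ s _ _ HvN HvN) as Hd.
    assert (Hz : ip (eps rho) W (Nf rho g s) + ip (eps rho) (Nf rho g s) W = 0).
    { apply (loc_const_deriv a b (fun u => ip (eps rho) (Nf rho g u) (Nf rho g u)) 1 s); auto.
      intros u Hu. destruct (L_Nprops rho a b g H u Hu) as [_ [_ [? _]]]; auto. }
    rewrite (ip_sym _ (Nf rho g s)) in Hz. lra. }
  assert (HWT : ip (eps rho) W (tangent g s) = - kap rho g s).
  { pose proof (ip_isd (eps rho) _ _ s _ _ HvN HvT) as Hd.
    assert (Hz : ip (eps rho) W (tangent g s) + ip (eps rho) (Nf rho g s) (vderiv (tangent g) s) = 0).
    { apply (loc_const_deriv a b (fun u => ip (eps rho) (Nf rho g u) (tangent g u)) 0 s); auto.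
      intros u Hu. destruct (L_Nprops rho a b g H u Hu) as [_ [? _]]; auto. }
    rewrite (Pj_split rho (g s) (vderiv (tangent g) s)) in Hz.
    rewrite ip_vadd_r, ip_vscal_r in Hz.
    change (Pj rho (g s) (vderiv (tangent g) s)) with (nablaT rho g 1 s) in Hz.
    rewrite (ip_sym _ (Nf rho g s) (nablaT rho g 1 s)) in Hz. fold (kap rho g s) in Hz.
    assert (Hz2 : rho * ip (eps rho) (vderiv (tangent g) s) (g s) * ip (eps rho) (Nf rho g s) (g s)
                  = ip (eps rho) (vderiv (tangent g) s) (g s) * (rho * ip (eps rho) (Nf rho g s) (g s))) by ring.
    rewrite Hz2, Hn in Hz. lra. }
  rewrite HWN, HWT.
  transitivity (vadd (vscal (- kap rho g s - ip (eps rho) W (g s) * (rho * ip (eps rho) (tangent g s) (g s))) (tangent g s))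
     (vscal (0 - ip (eps rho) W (g s) * (rho * ip (eps rho) (Nf rho g s) (g s))) (Nf rho g s))).
  - f_equal; f_equal; ring.
  - rewrite Ht, Hn. f_equal; f_equal; ring.
Qed.


Lemma Pj_lin4 rho x a1 b1 c d T T' N N' :
  Pj rho x (vadd (vadd (vscal a1 T) (vscal b1 T')) (vadd (vscal c N) (vscal d N'))) =
  vadd (vadd (vscal a1 (Pj rho x T)) (vscal b1 (Pj rho x T'))) (vadd (vscal c (Pj rho x N)) (vscal d (Pj rho x N'))).
Proof. apply veq; unfold Pj; vsimp; ring. Qed.

Lemma step rho a b g (V : R -> vec3) (f h f' h' : R -> R) : Hyp rho a b g ->
  (forall s, a < s < b -> V s = lin rho g (f s) (h s) s) ->
  (forall s, a < s < b -> is_derive f s (f' s)) ->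
  (forall s, a < s < b -> is_derive h s (h' s)) ->
  forall s, a < s < b ->
  nabla rho g V s = lin rho g (f' s - h s * kap rho g s) (h' s + f s * kap rho g s) s.
Proof.
  intros H HV Hf Hh s Hs.
  set (W := fun u => lin rho g (f u) (h u) u).
  assert (Heq : vderiv V s = vderiv W s).
  { assert (Hl : locally s (fun u => V u = W u)).
    { apply filter_imp with (fun u => a < u < b); [ intros; apply HV; auto | apply loc_I; auto ]. }
    apply veq; cbn [vderiv c1 c2 c3]; apply Derive_ext_loc;
      apply filter_imp with (fun u => V u = W u); auto; intros u Hu; rewrite Hu; auto. }
  assert (HvT : vis_derive (tangent g) s (vderiv (tangent g) s))
    by (apply VSM_vis with a b; auto; eapply VSM_T; eauto).
  assert (HvN : vis_derive (Nf rho g) s (vderiv (Nf rho g) s))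
    by (apply VSM_vis with a b; auto; eapply VSM_N; eauto).
  set (D := vadd (vadd (vscal (f' s) (tangent g s)) (vscal (f s) (vderiv (tangent g) s)))
                 (vadd (vscal (h' s) (Nf rho g s)) (vscal (h s) (vderiv (Nf rho g) s)))).
  assert (HD : vis_derive W s D).
  { pose proof (Hf s Hs) as Hf1. pose proof (Hh s Hs) as Hh1.
    destruct HvT as [t1 [t2 t3]]; destruct HvN as [n1 [n2 n3]].
    unfold W, lin, D; split; [|split]; cbn [c1 c2 c3 vadd vscal]; isdp; ring. }
  rewrite nabla_Pj, Heq, (vis_unique _ _ _ HD). unfold D. rewrite Pj_lin4.
  pose proof (A_tan rho (g s) _ (L_Tn rho a b g H s Hs)) as Ht.
  destruct (L_Nprops rho a b g H s Hs) as [HNn _].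
  pose proof (A_tan rho (g s) _ HNn) as Hn.
  rewrite (A_Pid rho (g s) (tangent g s) Ht), (A_Pid rho (g s) (Nf rho g s) Hn).
  change (Pj rho (g s) (vderiv (tangent g) s)) with (nablaT rho g 1 s).
  rewrite <- nabla_Pj. rewrite (L_nab1 rho a b g H s Hs), (L_nabN rho a b g H s Hs).
  unfold lin. apply veq; cbn [c1 c2 c3 vadd vscal]; ring.
Qed.


Definition KK rho g j s := Derive_n (kap rho g) j s.

Lemma KK_isd rho a b g j s : Hyp rho a b g -> a < s < b ->
  is_derive (KK rho g j) s (KK rho g (S j) s).
Proof. intros H Hs. unfold KK. apply SM_isd with a b; auto. apply SM_kap; auto. Qed.

Lemma ip_lin_T rho a b g f h s : Hyp rho a b g -> a < s < b ->
  ip (eps rho) (lin rho g f h s) (tangent g s) = f.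
Proof.
  intros H Hs. unfold lin. rewrite ip_vadd_l, !ip_vscal_l, (L_TT rho a b g H s Hs).
  destruct (L_Nprops rho a b g H s Hs) as [_ [HNT _]]. rewrite HNT. ring.
Qed.

Lemma ip_lin_N rho a b g f h s : Hyp rho a b g -> a < s < b ->
  ip (eps rho) (lin rho g f h s) (Nf rho g s) = h.
Proof.
  intros H Hs. unfold lin. rewrite ip_vadd_l, !ip_vscal_l.
  destruct (L_Nprops rho a b g H s Hs) as [_ [HNT [HNN _]]].
  rewrite HNN, ip_sym, HNT. ring.
Qed.

Lemma ip_curv rho X Y Z W : ip (eps rho) (curvR rho X Y Z) W =
  rho * (ip (eps rho) Y Z * ip (eps rho) X W - ip (eps rho) X Z * ip (eps rho) Y W).
Proof. unfold curvR. rewrite ip_vscal_l, ip_vsub_l, !ip_vscal_l. ring. Qed.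

Lemma ip_zero_l e W : ip e vzero W = 0.
Proof. unfold ip, vzero; simpl; ring. Qed.

Theorem corollary3p5 (rho a b : R) (g : R -> vec3) :
  a < b ->
  smooth_on a b g ->
  (forall t, a < t < b -> in_space_form rho (g t)) ->
  arc_length rho a b g ->
  triharmonic rho a b g ->
  (rho <= 0 -> geodesic rho a b g) /\
  (0 < rho -> geodesic rho a b g \/
     exists kappa : R, kappa ^ 2 = 2 * rho /\ circle_with_curvature rho a b g kappa).
Proof.
  intros Hab Hsm Hsf Hal Htri.
  assert (H : Hyp rho a b g) by (split; [|split]; auto).
  assert (HK : forall j s, a < s < b -> is_derive (KK rho g j) s (KK rho g (S j) s))
    by (intros; apply KK_isd with a b; auto).
  assert (R1 : forall s, a < s < b -> nablaT rho g 1 s = lin rho g 0 (KK rho g 0 s) s).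
  { intros s Hs. exact (L_nab1 rho a b g H s Hs). }
  assert (R2 : forall s, a < s < b ->
    nablaT rho g 2 s = lin rho g (- (KK rho g 0 s * KK rho g 0 s)) (KK rho g 1 s) s).
  { intros s Hs. change (nablaT rho g 2 s) with (nabla rho g (nablaT rho g 1) s).
    rewrite (step rho a b g (nablaT rho g 1) (fun _ => 0) (KK rho g 0) (fun _ => 0) (KK rho g 1)
      H R1 (fun s _ => isd_const 0 s) (fun s Hs => HK 0%nat s Hs) s Hs).
    change (kap rho g s) with (KK rho g 0 s). f_equal; ring. }
  assert (R3 : forall s, a < s < b ->
    nablaT rho g 3 s = lin rho g (- (3 * KK rho g 0 s * KK rho g 1 s))
                                 (KK rho g 2 s - KK rho g 0 s * KK rho g 0 s * KK rho g 0 s) s).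
  { intros s Hs. change (nablaT rho g 3 s) with (nabla rho g (nablaT rho g 2) s).
    rewrite (step rho a b g (nablaT rho g 2) (fun s => - (KK rho g 0 s * KK rho g 0 s)) (KK rho g 1)
      (fun s => - (KK rho g 1 s * KK rho g 0 s + KK rho g 0 s * KK rho g 1 s)) (KK rho g 2) H R2).
    - change (kap rho g s) with (KK rho g 0 s). f_equal; ring.
    - intros u Hu. pose proof (HK 0%nat u Hu). isdp. ring.
    - intros u Hu. apply HK; auto.
    - auto. }
  assert (R4 : forall s, a < s < b ->
    nablaT rho g 4 s = lin rho g
      (- (4 * KK rho g 0 s * KK rho g 2 s + 3 * KK rho g 1 s * KK rho g 1 s
          - KK rho g 0 s * KK rho g 0 s * KK rho g 0 s * KK rho g 0 s))
      (KK rho g 3 s - 6 * KK rho g 0 s * KK rho g 0 s * KK rho g 1 s) s).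
  { intros s Hs. change (nablaT rho g 4 s) with (nabla rho g (nablaT rho g 3) s).
    rewrite (step rho a b g (nablaT rho g 3) (fun s => - (3 * KK rho g 0 s * KK rho g 1 s))
      (fun s => KK rho g 2 s - KK rho g 0 s * KK rho g 0 s * KK rho g 0 s)
      (fun s => - (3 * KK rho g 1 s * KK rho g 1 s + 3 * KK rho g 0 s * KK rho g 2 s))
      (fun s => KK rho g 3 s - 3 * KK rho g 0 s * KK rho g 0 s * KK rho g 1 s) H R3).
    - change (kap rho g s) with (KK rho g 0 s). f_equal; ring.
    - intros u Hu. pose proof (HK 0%nat u Hu). pose proof (HK 1%nat u Hu). isdp. ring.
    - intros u Hu. pose proof (HK 0%nat u Hu). pose proof (HK 2%nat u Hu). isdp. ring.
    - auto. }
  assert (R5 : forall s, a < s < b ->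
    nablaT rho g 5 s = lin rho g
      (-5 * KK rho g 0 s * KK rho g 3 s - 10 * KK rho g 1 s * KK rho g 2 s
       + 10 * KK rho g 0 s ^ 3 * KK rho g 1 s)
      (KK rho g 4 s - 15 * KK rho g 0 s * KK rho g 1 s ^ 2 - 10 * KK rho g 0 s ^ 2 * KK rho g 2 s
       + KK rho g 0 s ^ 5) s).
  { intros s Hs. change (nablaT rho g 5 s) with (nabla rho g (nablaT rho g 4) s).
    rewrite (step rho a b g (nablaT rho g 4)
      (fun s => - (4 * KK rho g 0 s * KK rho g 2 s + 3 * KK rho g 1 s * KK rho g 1 s
          - KK rho g 0 s * KK rho g 0 s * KK rho g 0 s * KK rho g 0 s))
      (fun s => KK rho g 3 s - 6 * KK rho g 0 s * KK rho g 0 s * KK rho g 1 s)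
      (fun s => - (4 * KK rho g 1 s * KK rho g 2 s + 4 * KK rho g 0 s * KK rho g 3 s
          + 6 * KK rho g 1 s * KK rho g 2 s - 4 * KK rho g 0 s ^ 3 * KK rho g 1 s))
      (fun s => KK rho g 4 s - 12 * KK rho g 0 s * KK rho g 1 s ^ 2 - 6 * KK rho g 0 s ^ 2 * KK rho g 2 s)
      H R4).
    - change (kap rho g s) with (KK rho g 0 s). f_equal; ring.
    - intros u Hu. pose proof (HK 0%nat u Hu). pose proof (HK 1%nat u Hu). pose proof (HK 2%nat u Hu).
      isdp. ring.
    - intros u Hu. pose proof (HK 0%nat u Hu). pose proof (HK 1%nat u Hu). pose proof (HK 3%nat u Hu).
      isdp. ring.
    - auto. }
  assert (Heqs : forall s, a < s < b ->
     (-5 * KK rho g 0 s * KK rho g 3 s - 10 * KK rho g 1 s * KK rho g 2 s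
       + 10 * KK rho g 0 s ^ 3 * KK rho g 1 s = 0) /\
     (KK rho g 4 s - 15 * KK rho g 0 s * KK rho g 1 s ^ 2 - 10 * KK rho g 0 s ^ 2 * KK rho g 2 s
       + KK rho g 0 s ^ 5 + rho * (KK rho g 2 s - 2 * KK rho g 0 s ^ 3) = 0)).
  { intros s Hs. pose proof (Htri s Hs) as Ht.
    rewrite (R5 s Hs), (R3 s Hs), (R2 s Hs), (R1 s Hs) in Ht.
    pose proof (f_equal (fun v => ip (eps rho) v (tangent g s)) Ht) as HT.
    pose proof (f_equal (fun v => ip (eps rho) v (Nf rho g s)) Ht) as HN.
    cbv beta in HT, HN.
    rewrite ip_vadd_l, ip_vsub_l, !ip_curv, ip_zero_l in HT, HN.
    rewrite !(ip_lin_T rho a b g _ _ s H Hs), (L_TT rho a b g H s Hs) in HT.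
    rewrite !(ip_lin_T rho a b g _ _ s H Hs), !(ip_lin_N rho a b g _ _ s H Hs), (L_TT rho a b g H s Hs) in HN.
    destruct (L_Nprops rho a b g H s Hs) as [_ [HNT _]].
    rewrite (ip_sym _ (tangent g s) (Nf rho g s)), HNT in HN.
    split.
    - rewrite <- HT. ring.
    - rewrite <- HN. ring. }
  destruct (ode a b rho (KK rho g 0) (KK rho g 1) (KK rho g 2) (KK rho g 3) (KK rho g 4) Hab
     (HK 0%nat) (HK 1%nat) (HK 2%nat) (HK 3%nat) (fun s Hs => proj1 (Heqs s Hs))
     (fun s Hs => proj2 (Heqs s Hs))) as [C [HC HCeq]].
  assert (Hgeo : C = 0 -> geodesic rho a b g).
  { intros HC0 t Ht. rewrite (R1 t Ht), (HC t Ht), HC0. unfold lin. apply veq; vsimp; ring. }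
  assert (Hsq : C <> 0 -> C ^ 2 = 2 * rho).
  { intros HC0. assert (HC3 : C ^ 3 <> 0) by (apply pow_nonzero; auto).
    apply (Rmult_eq_reg_l (C ^ 3)); auto.
    transitivity (C ^ 5 - 2 * rho * C ^ 3 + 2 * rho * C ^ 3); [ring|]. rewrite HCeq. ring. }
  split.
  - intros Hr. apply Hgeo. destruct (Req_dec C 0) as [|HC0]; auto. exfalso.
    pose proof (Hsq HC0). pose proof (Rsqr_pos_lt C HC0). unfold Rsqr in H1.
    assert (C ^ 2 = C * C) by ring. lra.
  - intros Hr. destruct (Req_dec C 0) as [HC0|HC0]; [left; auto|right].
    exists C. split; auto.
    intros t Ht. rewrite (R1 t Ht), (HC t Ht). unfold lin, Nf. apply veq; vsimp; ring.
Qed.
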